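(* Let $k$ be a commutative ring and $A$ a unital involutive associative $k$-algebra. There is an isomorphism \[HO_0(A)\cong \frac{A}{(a_0a_1a_2-a_2\overline{a_1}a_0)},\] where $(a_0a_1a_2-a_2\overline{a_1}a_0)$ denotes the two-sided ideal of $A$ generated by all elements $a_0a_1a_2-a_2\overline{a_1}a_0$ with $a_0,a_1,a_2\in A$. In particular, $HO_0(A)$ has a ring structure induced from the ring structure of $A$.
   Context: An involutive $k$-algebra is a unital associative $k$-algebra with a $k$-linear map $a\mapsto\overline{a}$ with $\overline{\overline{a}}=a$, $\overline{ab}=\overline{b}\,\overline{a}$, $\overline 1=1$. Let $C_2=\{1,t\}$. The hyperoctahedral category $\Delta H$: objects $[n]=\{0,\dots,n\}$, $n\ge0$; a morphism $f:[n]\to[m]$ is a map of sets with a total order on each fibre and a $C_2$-label on each element of $[n]$; composition $g\circ f$ has fibre over $i$ equal to the concatenation, in the order of $g^{-1}(i)$, of the fibres $f^{-1}(j)$, each replaced by $f^{-1}(j)^t$ (order reversed, labels multiplied by $t$) when $j$ has label $t$ in $g$; labels multiply. The hyperoctahedral bar construction $\mathsf{H}_A:\Delta H\to\mathbf{Mod}_k$ sends $[n]\mapsto A^{\otimes(n+1)}$ and $f$ to $a_0\otimes\cdots\otimes a_n\mapsto b_0\otimes\cdots\otimes b_m$, $b_i$ being the ordered product over $x\in f^{-1}(i)$ of $a_x$ (label $1$) or $\overline{a_x}$ (label $t$), empty product $1_A$. Hyperoctahedral homology is $HO_n(A)=\mathrm{Tor}_n^{\Delta H}(k^{\star},\mathsf{H}_A)$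 with $k^{\star}$ the constant right $\Delta H$-module at $k$. *)

(* Defs.v *)
From HB Require Import structures.
From mathcomp Require Import all_boot all_order all_algebra.
Set Implicit Arguments. Unset Strict Implicit. Unset Printing Implicit Defensive.
Import GRing.Theory.
Local Open Scope ring_scope.

Definition involution (k : comPzRingType) (A : algType k) (bar : A -> A) : Prop :=
  [/\ forall (c : k) (a b : A), bar (c *: a + b) = c *: bar a + bar b,
      forall a, bar (bar a) = a,
      forall a b, bar (a * b) = bar b * bar a
    & bar 1 = 1].

(* A morphism [n] -> [m] of the hyperoctahedral category Delta H, with
   [n] = 'I_n.+1.  [fib f i] is the fibre over i, listed in its total order;
   every element of [n] lies in exactly one fibre exactly once.  [lab f x]
   is the C_2-label of x ([true] = t). *)
Record DHmor (n m : nat) := DHMor {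
  fib : 'I_m.+1 -> seq 'I_n.+1;
  lab : 'I_n.+1 -> bool;
  fib_ok : perm_eq (flatten [seq fib i | i <- enum 'I_m.+1]) (enum 'I_n.+1) }.

Section Bar.
Variables (k : comPzRingType) (A : algType k) (bar : A -> A).

(* Action of the hyperoctahedral bar construction H_A on pure tensors
   a_0 (x) ... (x) a_n, represented by a : 'I_n.+1 -> A. *)
Definition Hact n m (f : DHmor n m) (a : 'I_n.+1 -> A) : 'I_m.+1 -> A :=
  fun i => \prod_(x <- fib f i) (if lab f x then bar (a x) else a x).

Definition upd n (a : 'I_n.+1 -> A) (i : 'I_n.+1) (x : A) : 'I_n.+1 -> A :=
  fun j => if j == i then x else a j.

(* k-multilinear maps A^{n+1} -> M, i.e. k-linear maps A^{(x)(n+1)} -> M. *)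
Definition multilinear (M : lmodType k) n (psi : ('I_n.+1 -> A) -> M) : Prop :=
  forall (a : 'I_n.+1 -> A) (i : 'I_n.+1) (c : k) (x y : A),
    psi (upd a i (c *: x + y)) = c *: psi (upd a i x) + psi (upd a i y).

Definition cocone (M : lmodType k) (psi : forall n, ('I_n.+1 -> A) -> M) : Prop :=
  (forall n, multilinear (psi n)) /\
  (forall n m (f : DHmor n m) (a : 'I_n.+1 -> A), psi m (Hact f a) = psi n a).

(* (M, psi) is a colimit of H_A over Delta H, i.e. M = k^* (x)_{Delta H} H_A
   = Tor_0^{Delta H}(k^*, H_A) = HO_0(A). *)
Definition is_HO0 (M : lmodType k) (psi : forall n, ('I_n.+1 -> A) -> M) : Prop :=
  cocone psi /\
  forall (N : lmodType k) (chi : forall n, ('I_n.+1 -> A) -> N), cocone chi ->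
    (exists u : {linear M -> N}, forall n a, u (psi n a) = chi n a) /\
    (forall u v : {linear M -> N},
        (forall n a, u (psi n a) = chi n a) ->
        (forall n a, v (psi n a) = chi n a) -> u =1 v).

Definition in_HO_ideal (x : A) : Prop :=
  forall P : A -> Prop,
    P 0 ->
    (forall u v, P u -> P v -> P (u + v)) ->
    (forall u b v, P b -> P (u * b * v)) ->
    (forall a0 a1 a2, P (a0 * a1 * a2 - a2 * bar a1 * a0)) ->
    P x.

End Bar.

(* Main.v *)
Require Import Defs.
From HB Require Import structures.
From mathcomp Require Import all_boot all_order all_algebra.
From Stdlib Require Import FunctionalExtensionality.
Import GRing.Theory.
Local Open Scope ring_scope.

Section Aux.
Variables (k : comPzRingType) (A : algType k) (bar : A -> A).
Hypothesis Hbar : involution bar.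
Variables (Q : lmodType k) (pi : {linear A -> Q}).
Hypothesis pi_ker : forall a : A, pi a = 0 <-> in_HO_ideal bar a.

Lemma bar1 : bar 1 = 1. Proof. by case: Hbar. Qed.

Lemma pi_eqI x y : pi x = pi y <-> in_HO_ideal bar (x - y).
Proof.
split => [H|/pi_ker]; first by apply/pi_ker; rewrite linearB /= H subrr.
by rewrite linearB /= => /eqP; rewrite subr_eq0 => /eqP.
Qed.

Lemma pi_cong u v {x y} : pi x = pi y -> pi (u * x * v) = pi (u * y * v).
Proof.
move/pi_eqI => H; apply/pi_eqI => P H0 HD HM HG.
by have := HM u (x - y) v (H P H0 HD HM HG); rewrite mulrBr mulrBl.
Qed.

Lemma pi_comm x y : pi (x * y) = pi (y * x).
Proof.
apply/pi_eqI => P H0 HD HM HG.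
by have := HG x 1 y; rewrite bar1 !mulr1.
Qed.

Lemma pi_bar x : pi (bar x) = pi x.
Proof.
apply/esym/pi_eqI => P H0 HD HM HG.
by have := HG 1 x 1; rewrite !mulr1 !mul1r.
Qed.

Lemma pi_congl u {x y} : pi x = pi y -> pi (u * x) = pi (u * y).
Proof. by move=> H; have := pi_cong u 1 H; rewrite !mulr1. Qed.

Lemma pi_congr v {x y} : pi x = pi y -> pi (x * v) = pi (y * v).
Proof. by move=> H; have := pi_cong 1 v H; rewrite !mul1r. Qed.

Lemma pi_nobar (T : Type) (s : seq T) (a : T -> A) (l : T -> bool) :
  pi (\prod_(x <- s) (if l x then bar (a x) else a x)) = pi (\prod_(x <- s) a x).
Proof.
elim: s => [|x s IH]; first by rewrite !big_nil.
rewrite !big_cons.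
rewrite (pi_congl _ IH).
apply: pi_congr; case: (l x) => //; exact: pi_bar.
Qed.

Lemma pi_rem (T : eqType) (s : seq T) (a : T -> A) x : x \in s ->
  pi (\prod_(y <- s) a y) = pi (a x * \prod_(y <- rem x s) a y).
Proof.
elim: s => [|y s IH] //=; rewrite inE.
case: (eqVneq y x) => [-> _|nxy]; first by rewrite big_cons.
move=> /= xs.

rewrite !big_cons (pi_congl _ (IH xs)) mulrA (pi_congr _ (pi_comm _ _)) -mulrA //.
Qed.

Lemma pi_perm (T : eqType) (s t : seq T) (a : T -> A) : perm_eq s t ->
  pi (\prod_(y <- s) a y) = pi (\prod_(y <- t) a y).
Proof.
elim: s t => [|x s IH] t.
  by move=> /perm_size /esym /size0nil ->.
move=> pst.
have xt : x \in t by rewrite -(perm_mem pst) mem_head.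
rewrite (@pi_rem _ t a x xt) big_cons; apply: pi_congl; apply: IH.
by rewrite -(perm_cons x) (perm_trans pst) // perm_to_rem.
Qed.

Lemma prod_upd n (a : 'I_n.+1 -> A) i c x y (s : seq 'I_n.+1) :
  uniq s -> i \in s ->
  \prod_(j <- s) upd a i (c *: x + y) j =
  c *: \prod_(j <- s) upd a i x j + \prod_(j <- s) upd a i y j.
Proof.
elim: s => [|j s IH] //= /andP[js us]; rewrite inE !big_cons.
case: (eqVneq j i) => [ej _|nji].
  subst j.
  have E : forall z, \prod_(j0 <- s) upd a i z j0 = \prod_(j0 <- s) a j0.
    move=> z; apply: eq_big_seq => l ls; rewrite /upd; case: eqP => // li.
    by move: js; rewrite -li ls.
  by rewrite !E /upd eqxx mulrDl scalerAl.
move=> /orP[ij|iS]; first by [].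
by rewrite IH // /upd (negbTE nji) mulrDr scalerAr.
Qed.

End Aux.

Definition mor0 n (s : seq 'I_n.+1) (l : 'I_n.+1 -> bool)
  (H : perm_eq s (enum 'I_n.+1)) : DHmor n 0.
Proof.
refine (@DHMor n 0 (fun _ => s) l _).
have -> : enum 'I_1 = [:: ord0].
  apply: (inj_map val_inj); by rewrite val_enum_ord.
by rewrite /= cats0.
Defined.

Lemma enum_I1 : enum 'I_1 = [:: ord0].
Proof. apply: (inj_map val_inj); by rewrite val_enum_ord. Qed.

Theorem theorem5p8 (k : comPzRingType) (A : algType k) (bar : A -> A)
    (Hbar : involution bar)
    (Q : lmodType k) (pi : {linear A -> Q})
    (pi_surj : forall q : Q, exists a : A, pi a = q)
    (pi_ker : forall a : A, pi a = 0 <-> in_HO_ideal bar a) :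
  exists psi : forall n, ('I_n.+1 -> A) -> Q, is_HO0 bar psi.
Proof.
exists (fun n a => pi (\prod_(x <- enum 'I_n.+1) a x)).
split.
  split.
    move=> n a i c x y.
    rewrite prod_upd ?enum_uniq ?mem_enum //.
    by rewrite linearD linearZ.
  move=> n m f a; rewrite /Hact.
  set F := fun x => if lab f x then bar (a x) else a x.
  have -> : \prod_(i <- enum 'I_m.+1) \prod_(x <- fib f i) F x =
    \prod_(x <- flatten [seq fib f i | i <- enum 'I_m.+1]) F x.
    by rewrite big_flatten big_map.
  rewrite /F (@pi_nobar _ _ _ _ _ pi_ker).
  exact: (@pi_perm _ _ _ Hbar _ _ pi_ker _ _ _ a (fib_ok f)).
move=> N chi [chiL chiN].
pose c0 (x : A) := chi 0%N (fun _ => x).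
have updE : forall (a : 'I_1 -> A) z, upd a ord0 z = (fun _ => z).
  by move=> a z; apply: functional_extensionality => j; rewrite /upd ord1 eqxx.
have c0lin : forall c x y, c0 (c *: x + y) = c *: c0 x + c0 y.
  move=> c x y; rewrite /c0 -(updE (fun _ => 0) (c *: x + y)) -(updE (fun _ => 0) x).
  rewrite -(updE (fun _ => 0) y); exact: chiL.
pose C0 : {linear A -> N} := HB.pack c0 (GRing.isLinear.Build k A N *:%R c0 c0lin).
have C0E : forall x, C0 x = c0 x by [].
have chi0 : forall n (s : seq 'I_n.+1) l (H : perm_eq s (enum 'I_n.+1)) a,
    C0 (\prod_(x <- s) (if l x then bar (a x) else a x)) = chi n a.
  move=> n s l H a; rewrite C0E /c0.
  by rewrite -(chiN n 0%N (@mor0 n s l H) a).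
have C0I : forall x, in_HO_ideal bar x -> C0 x = 0.
  move=> x Hx.
  suff: forall u v, C0 (u * x * v) = 0 by move=> /(_ 1 1); rewrite mulr1 mul1r.
  apply: (Hx (fun x => forall u v, C0 (u * x * v) = 0)).
  - by move=> u v; rewrite mulr0 mul0r linear0.
  - by move=> p q Hp Hq u v; rewrite mulrDr mulrDl linearD Hp Hq addr0.
  - move=> u b v Hb u' v'.
    have -> : u' * (u * b * v) * v' = (u' * u) * b * (v * v') by rewrite !mulrA.
    exact: Hb.
  move=> a0 a1 a2 u v.
  pose a := fun i : 'I_5 => nth 0 [:: u; a0; a1; a2; v] i.
  pose o0 := @Ordinal 5 0 isT. pose o1 := @Ordinal 5 1 isT.
  pose o2 := @Ordinal 5 2 isT. pose o3 := @Ordinal 5 3 isT.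
  pose o4 := @Ordinal 5 4 isT.
  have H1 : perm_eq [:: o0; o1; o2; o3; o4] (enum 'I_5).
    apply: uniq_perm; [by [] | exact: enum_uniq |].
    by move=> [[|[|[|[|[|m]]]]] Hm]; rewrite mem_enum.
  have H2 : perm_eq [:: o0; o3; o2; o1; o4] (enum 'I_5).
    apply: uniq_perm; [by [] | exact: enum_uniq |].
    by move=> [[|[|[|[|[|m]]]]] Hm]; rewrite mem_enum.
  have E1 := chi0 4%N _ (fun _ => false) H1 a.
  have E2 := chi0 4%N _ (fun x => x == o2) H2 a.
  rewrite !big_cons big_nil /= in E1.
  rewrite !big_cons big_nil /= in E2.
  rewrite mulrBr mulrBl linearB /=.
  have -> : u * (a0 * a1 * a2) * v = a o0 * (a o1 * (a o2 * (a o3 * (a o4 * 1)))).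
    by rewrite /a /= mulr1 !mulrA.
  have -> : u * (a2 * bar a1 * a0) * v = a o0 * (a o3 * (bar (a o2) * (a o1 * (a o4 * 1)))).
    by rewrite /a /= mulr1 !mulrA.
  by rewrite E1 E2 subrr.
have C0eq : forall x y, pi x = pi y -> C0 x = C0 y.
  move=> x y /(@pi_eqI _ _ _ _ _ pi_ker) /C0I; rewrite linearB /=; move/eqP; rewrite subr_eq0.
  by move/eqP.
have pis : forall q, exists a, pi a == q.
  by move=> q; have [a <-] := pi_surj q; exists a.
pose g (q : Q) := C0 (xchoose (pis q)).
have gE : forall a, g (pi a) = C0 a.
  move=> a; apply: C0eq; apply/eqP; exact: xchooseP (pis (pi a)).
have glin : forall c x y, g (c *: x + y) = c *: g x + g y.
  move=> c x y.
  have [a <-] := pi_surj x; have [b <-] := pi_surj y.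
  have -> : c *: pi a + pi b = pi (c *: a + b) by rewrite linearP.
  by rewrite !gE linearP.
split.
  pose G : {linear Q -> N} := HB.pack g (GRing.isLinear.Build k Q N *:%R g glin).
  exists G => n a.
  have -> : G (pi (\prod_(x <- enum 'I_n.+1) a x)) = g (pi (\prod_(x <- enum 'I_n.+1) a x)) by [].
  rewrite gE.
  have := chi0 n _ (fun _ => false) (perm_refl _) a; by [].
move=> u v Hu Hv q.
have [a <-] := pi_surj q.
have := Hu 0%N (fun _ => a); have := Hv 0%N (fun _ => a).
rewrite enum_I1 big_cons big_nil mulr1 => -> ->//.
Qed.
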